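(* Let $\zeta_3=\int_0^\infty \frac{\mathrm{d}t}{\sqrt{1+t^6}}$ and let $\mathrm{sleafh}_3:(-\zeta_3,\zeta_3)\to\mathbb{R}$ be the hyperbolic leaf function of basis $3$. For every $l\in(-\zeta_3,\zeta_3)$, writing $S=\mathrm{sleafh}_3(l)$, $$\Bigl(\mathrm{sleafh}_3\Bigl(\frac l2\Bigr)\Bigr)^2=-\frac12S^2-\frac12\sqrt{1-S^2+S^4}+\frac12\sqrt{-1+S^2+2S^4+\frac{2+2S^6}{\sqrt{1-S^2+S^4}}}.$$
   Context: For a natural number $n$, let $\zeta_n=\int_0^\infty \frac{\mathrm{d}t}{\sqrt{1+t^{2n}}}$. The hyperbolic leaf function $\mathrm{sleafh}_n$ is the solution $r(l)$ on $(-\zeta_n,\zeta_n)$ of $\frac{\mathrm{d}^2r}{\mathrm{d}l^2}=n\,r^{2n-1}$ with $r(0)=0$, $r'(0)=1$; equivalently it is the inverse function of $r\mapsto \int_0^r \frac{\mathrm{d}t}{\sqrt{1+t^{2n}}}$, $r\in\mathbb{R}$. *)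

(* Defs.v *)
From Stdlib Require Import Reals ClassicalEpsilon.
From Coquelicot Require Import Coquelicot.
Open Scope R_scope.

Definition leaf_int (n : nat) (r : R) : R :=
  RInt (fun t => / sqrt (1 + t ^ (2 * n))) 0 r.

Definition zeta (n : nat) : R := real (Lim (fun b => leaf_int n b) p_infty).

(* sleafh_n = inverse function of r |-> leaf_int n r (which is strictly
   increasing, so for l in (-zeta_n, zeta_n) the chosen r is the unique one). *)
Definition sleafh (n : nat) (l : R) : R :=
  epsilon (inhabits 0) (fun r => leaf_int n r = l).

(* Main.v *)
Require Import Defs.
From Stdlib Require Import Reals Lra Psatz ClassicalEpsilon Classical_Prop.
From Coquelicot Require Import Coquelicot.
Open Scope R_scope.

Definition lf (t : R) : R := / sqrt (1 + t ^ 6).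

Lemma lf_pos t : 0 < lf t.
Proof. unfold lf. apply Rinv_0_lt_compat, sqrt_lt_R0. nra. Qed.

Lemma lf_cont t : continuous lf t.
Proof.
  apply (@ex_derive_continuous R_AbsRing R_NormedModule). unfold lf. auto_derive.
  assert (0 < sqrt (1 + t^6)) by (apply sqrt_lt_R0; nra). repeat split; try nra; try lra. replace (t * (t * (t * (t * (t * (t * 1)))))) with (t^6) by ring. lra.
Qed.

Lemma F_deriv x : is_derive (leaf_int 3) x (lf x).
Proof.
  unfold leaf_int. simpl (2*3)%nat.
  apply (is_derive_RInt lf (RInt lf 0) 0 x).
  - apply filter_forall. intro b. apply (@RInt_correct R_CompleteNormedModule), (@ex_RInt_continuous R_CompleteNormedModule).
    intros; apply lf_cont.
  - apply lf_cont.
Qed.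

Notation F := (leaf_int 3).

Lemma deriv_cont g x d : is_derive g x d -> continuity_pt g x.
Proof.
  intro H. apply continuity_pt_filterlim.
  apply (@ex_derive_continuous R_AbsRing R_NormedModule). exists d; exact H.
Qed.

Lemma zero_deriv g a b :
  (forall x, Rmin a b <= x <= Rmax a b -> is_derive g x 0) -> g b = g a.
Proof.
  intro H. destruct (MVT_gen g a b (fun _ => 0)) as [c [_ Hc]].
  - intros x Hx; apply H; lra.
  - intros x Hx; eapply deriv_cont; apply H; exact Hx.
  - lra.
Qed.

Lemma F_cont x : continuity_pt F x.
Proof. eapply deriv_cont; apply F_deriv. Qed.

Lemma F_incr a b : a < b -> F a < F b.
Proof.
  intro Hab. destruct (MVT_gen F a b lf) as [c [_ Hc]].
  - intros; apply F_deriv.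
  - intros; apply F_cont.
  - pose proof (lf_pos c). nra.
Qed.

Lemma F_inj a b : F a = F b -> a = b.
Proof.
  intro H. destruct (Rtotal_order a b) as [h|[h|h]]; auto.
  - apply F_incr in h; lra.
  - apply F_incr in h; lra.
Qed.

Lemma F0 : F 0 = 0.
Proof. unfold leaf_int. apply (@RInt_point R_CompleteNormedModule). Qed.

Lemma F_odd r : F (- r) = - F r.
Proof.
  assert (H : (fun r => F (-r) + F r) r = (fun r => F (-r) + F r) 0).
  { apply (zero_deriv (fun r => F (-r) + F r) 0 r). intros x _.
    assert (Hd : is_derive (fun r => F (-r) + F r) x ((-1) * lf (-x) + lf x)).
    { apply (is_derive_plus (fun r => F (-r)) F).
      + apply (is_derive_comp F (fun r => -r) x (lf (-x)) (-1)). apply F_deriv.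
        apply (is_derive_opp (fun r => r) x 1). apply (is_derive_id x).
      + apply F_deriv. }
    replace 0 with ((-1) * lf (-x) + lf x). exact Hd.
    unfold lf. replace ((-x)^6) with (x^6) by ring. ring. }
  simpl in H. rewrite Ropp_0, F0 in H. lra.
Qed.
Lemma alg_core X q w x : 0 <= X -> 0 < q -> q^2 = 1-X+X^2 -> 0 <= w ->
  w^2 = -1+X+2*X^2+2*(1+X)*q -> x = (-X-q+w)/2 ->
  (0 <= x < 1/2) /\ X*(1-8*x^3) = 4*x*(1+x^3).
Proof.
  intros HX Hq Hq2 Hw Hw2 Hx.
  assert (Hqa : 1 - X <= q).
  { destruct (Rle_dec X 1). 
    - apply Rsqr_incr_0_var; unfold Rsqr; nra.
    - lra. }
  assert (H1 : X + q <= w).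
  { apply Rsqr_incr_0_var; unfold Rsqr; nra. }
  assert (H2 : w < X + q + 1).
  { apply Rsqr_incrst_0; unfold Rsqr; nra. }
  split. lra.
  set (A := 2*x^2+1-X*(1-2*x)).
  assert (E : A - (1-2*x)*q = 0).
  { subst x. unfold A. nra. }
  assert (P : A^2 - (1-2*x)^2*(1-X+X^2) = 0).
  { replace (A^2 - (1-2*x)^2*(1-X+X^2)) with
     ((A - (1-2*x)*q)*(A + (1-2*x)*q) + (1-2*x)^2*(q^2 - (1-X+X^2))) by ring.
    rewrite E, Hq2. ring. }
  unfold A in P. nra.
Qed.

Definition xf (S : R) : R :=
    - (1/2) * S ^ 2 - (1/2) * sqrt (1 - S ^ 2 + S ^ 4)
    + (1/2) * sqrt (-1 + S ^ 2 + 2 * S ^ 4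
                    + (2 + 2 * S ^ 6) / sqrt (1 - S ^ 2 + S ^ 4)).

Lemma alg_S S : (0 <= xf S < 1/2) /\ S^2*(1-8*(xf S)^3) = 4*(xf S)*(1+(xf S)^3).
Proof.
  set (X := S^2).
  assert (HX : 0 <= X) by (unfold X; nra).
  assert (Hq0 : 0 < 1 - X + X^2) by nra.
  set (q := sqrt (1 - X + X^2)).
  assert (Hq : 0 < q) by (apply sqrt_lt_R0; lra).
  assert (Hq2 : q^2 = 1 - X + X^2) by (unfold q; rewrite pow2_sqrt; lra).
  assert (Hqa : 1/2 <= q) by (apply Rsqr_incr_0_var; unfold Rsqr; nra).
  assert (E6 : (2 + 2 * S ^ 6) / sqrt (1 - S ^ 2 + S ^ 4) = 2*(1+X)*q).
  { replace (S^4) with (X^2) by (unfold X; ring). fold X. fold q.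
    replace (S^6) with (X^3) by (unfold X; ring). 
    apply (Rmult_eq_reg_r q); [|lra]. unfold Rdiv. rewrite Rmult_assoc, Rinv_l; [|lra].
    replace (2 * (1 + X) * q * q) with (2*(1+X)*q^2) by ring. rewrite Hq2. ring. }
  unfold xf. rewrite E6. replace (S^4) with (X^2) by (unfold X; ring). fold X. fold q.
  assert (HR : 0 <= -1 + X + 2 * X ^ 2 + 2 * (1 + X) * q) by nra.
  apply (alg_core X q (sqrt (-1 + X + 2 * X ^ 2 + 2 * (1 + X) * q))); auto.
  apply sqrt_pos. rewrite pow2_sqrt; lra. lra.
Qed.
Definition Dd (t : R) := 2 * t * sqrt ((1 + t^6) / (1 - 8 * t^6)).
Definition Dp (x : R) := (2 * ((1 + x^6) / (1 - 8 * x^6)) + x * (54 * x^5 / (1 - 8*x^6)^2))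
   / sqrt ((1 + x^6) / (1 - 8 * x^6)).

Lemma Dd_deriv x : 8 * x^6 < 1 -> is_derive Dd x (Dp x).
Proof.
  intros Hx. unfold Dd. auto_derive.
  - replace (x * (x * (x * (x * (x * (x * 1)))))) with (x^6) by ring.
    split; [lra|split; auto]. apply Rmult_lt_0_compat. nra. apply Rinv_0_lt_compat; lra.
  - replace (x * (x * (x * (x * (x * (x * 1)))))) with (x^6) by ring.
    replace (x * (x * (x * (x * (x * 1))))) with (x^5) by ring.
    unfold Dp. 
    assert (Hg : 0 < (1 + x^6) / (1 - 8 * x^6)).
    { apply Rdiv_lt_0_compat; nra. }
    replace ((1 + x ^ 6) * / (1 + - (8 * x ^ 6))) with ((1 + x^6) / (1 - 8 * x^6)) by (unfold Rdiv; f_equal; f_equal; ring).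
    set (g := (1 + x^6) / (1 - 8 * x^6)) in *.
    assert (Hs : 0 < sqrt g) by (apply sqrt_lt_R0; lra).
    assert (Hs2 : sqrt g * sqrt g = g) by (apply sqrt_sqrt; lra).
    set (s := sqrt g) in *.
    assert (Hm : 1 - 8 * x^6 <> 0) by lra.
    apply (Rmult_eq_reg_r s); [|lra].
    field_simplify; try lra.
    replace (s^2) with g by (rewrite <- Hs2; ring). f_equal. ring.
Qed.

Lemma key_id x : 8 * x^6 < 1 -> Dp x * lf (Dd x) = 2 * lf x.
Proof.
  intros Hx. unfold lf, Dp, Dd.
  assert (Hu : 0 <= x^6) by (replace (x^6) with ((x^3)^2) by ring; apply pow2_ge_0).
  assert (Hg : 0 < (1 + x^6) / (1 - 8 * x^6)) by (apply Rdiv_lt_0_compat; nra).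
  set (g := (1 + x^6) / (1 - 8 * x^6)) in *.
  assert (Hs : 0 < sqrt g) by (apply sqrt_lt_R0; lra).
  assert (Hs2 : sqrt g ^ 2 = g) by (apply pow2_sqrt; lra).
  set (s := sqrt g) in *.
  assert (Hp : 0 < sqrt (1 + x^6)) by (apply sqrt_lt_R0; lra).
  assert (Hp2 : sqrt (1 + x^6) ^ 2 = 1 + x^6) by (apply pow2_sqrt; lra).
  set (p := sqrt (1 + x^6)) in *.
  set (u := x^6) in *.
  set (m := 1 - 8*u).
  assert (Hm : 0 < m) by (unfold m; lra).
  assert (HN : 0 < 1 + 20*u - 8*u^2) by nra.
  set (V := (2 * g + x * (54 * x ^ 5 / m ^ 2)) / s * p / 2).
  assert (Hxx : x * x^5 = u) by (unfold u; ring).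
  assert (HV0 : 2 * g + x * (54 * x ^ 5 / m ^ 2) = 2 * (1 + 20*u - 8*u^2) / m^2).
  { unfold g. replace (x * (54 * x^5 / m^2)) with (54*u/m^2) by (unfold Rdiv; rewrite <- Hxx; ring).
    unfold m. field. lra. }
  assert (HV : 0 < V).
  { unfold V. rewrite HV0. apply Rmult_lt_0_compat; [|lra].
    apply Rmult_lt_0_compat; [|lra]. apply Rdiv_lt_0_compat; [|lra].
    apply Rdiv_lt_0_compat; nra. }
  assert (HsD : sqrt (1 + (2 * x * s) ^ 6) = V).
  { rewrite <- (sqrt_pow2 V) by lra. f_equal.
    unfold V. rewrite HV0.
    replace ((2 * x * s) ^ 6) with (64 * u * (s^2)^3) by (unfold u; ring).
    replace (((2 * (1 + 20 * u - 8 * u ^ 2) / m ^ 2) / s * p / 2) ^ 2)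
      with ((1 + 20 * u - 8 * u ^ 2)^2 / m^4 * p^2 / s^2) by (field; split; lra).
    rewrite Hs2, Hp2. unfold g, m. field. split; lra. }
  rewrite HsD. unfold V. rewrite HV0. field. repeat split; lra.
Qed.

Lemma doubling t : 0 <= t -> 8 * t^6 < 1 -> F (Dd t) = 2 * F t.
Proof.
  intros Ht Ht6.
  assert (H : (fun t => F (Dd t) - F t - F t) t = (fun t => F (Dd t) - F t - F t) 0).
  { apply (zero_deriv (fun t => F (Dd t) - F t - F t) 0 t). intros x Hx.
    rewrite Rmin_left in Hx by lra. rewrite Rmax_right in Hx by lra.
    assert (Hx6 : 8 * x^6 < 1).
    { assert (x^6 <= t^6) by (apply pow_incr; lra). lra. }
    assert (Hd : is_derive (fun t => F (Dd t) - F t - F t) x (Dp x * lf (Dd x) - lf x - lf x)).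
    { apply (is_derive_minus (fun t => F (Dd t) - F t) F).
      apply (is_derive_minus (fun t => F (Dd t)) F).
      apply (is_derive_comp F Dd x (lf (Dd x)) (Dp x)). apply F_deriv.
      apply Dd_deriv; auto. apply F_deriv. apply F_deriv. }
    replace 0 with (Dp x * lf (Dd x) - lf x - lf x). exact Hd.
    rewrite key_id by auto. ring. }
  simpl in H. replace (Dd 0) with 0 in H by (unfold Dd; ring). rewrite F0 in H. lra.
Qed.

Lemma F_abs S : F (Rabs S) = 2 * F (sqrt (xf S)).
Proof.
  destruct (alg_S S) as [[Hx0 Hx1] HS].
  set (x := xf S) in *.
  assert (Hx3 : 0 <= x^3) by (apply pow_le; lra).
  assert (Hx8 : 8 * x^3 < 1).
  { assert (x*x <= 1/4) by nra. assert (x*x*x <= x/4) by nra.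
    replace (x^3) with (x*x*x) by ring. lra. }
  set (t := sqrt x).
  assert (Ht : 0 <= t) by apply sqrt_pos.
  assert (Ht2 : t^2 = x) by (apply pow2_sqrt; lra).
  assert (Ht6 : t^6 = x^3) by (rewrite <- Ht2; ring).
  rewrite <- doubling by (auto; lra).
  f_equal. unfold Dd. rewrite Ht6.
  assert (Hg : 0 <= (1 + x^3) / (1 - 8 * x^3)) by (apply Rlt_le, Rdiv_lt_0_compat; lra).
  assert (Hq : 0 <= sqrt ((1 + x^3) / (1 - 8 * x^3))) by apply sqrt_pos.
  rewrite <- (sqrt_pow2 (Rabs S)) by apply Rabs_pos.
  rewrite <- (sqrt_pow2 (2 * t * sqrt ((1 + x^3) / (1 - 8 * x^3)))) by (apply Rmult_le_pos; lra).
  f_equal. rewrite pow2_abs.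
  replace ((2 * t * sqrt ((1 + x ^ 3) / (1 - 8 * x ^ 3))) ^ 2) with
    (4 * t^2 * (sqrt ((1 + x ^ 3) / (1 - 8 * x ^ 3)))^2) by ring.
  rewrite pow2_sqrt by lra. rewrite Ht2.
  apply (Rmult_eq_reg_r (1 - 8 * x^3)); [|lra]. rewrite HS. field. lra.
Qed.

Lemma F_bound b : F b <= 2 * F 1.
Proof.
  destruct (Rle_dec 0 b) as [Hb|Hb].
  - rewrite <- (Rabs_right b) by lra. rewrite F_abs.
    destruct (alg_S b) as [[Hx0 Hx1] _].
    assert (sqrt (xf b) < 1).
    { rewrite <- sqrt_1. apply sqrt_lt_1_alt. lra. }
    assert (F (sqrt (xf b)) < F 1) by (apply F_incr; auto). lra.
  - assert (F b < F 0) by (apply F_incr; lra).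
    assert (F 0 < F 1) by (apply F_incr; lra). rewrite F0 in *. lra.
Qed.

Definition FE (y : R) : Prop := exists b, y = F b.

Lemma FE_lub : { L | is_lub FE L }.
Proof.
  apply completeness.
  - exists (2 * F 1). intros y [b ->]. apply F_bound.
  - exists (F 0). exists 0. reflexivity.
Qed.

Lemma zeta_eq : zeta 3 = proj1_sig FE_lub.
Proof.
  destruct FE_lub as [L [HL1 HL2]]. simpl.
  unfold zeta.
  assert (Hlim : is_lim (fun b => leaf_int 3 b) p_infty L).
  { apply is_lim_spec. intro eps. simpl.
    destruct (Classical_Prop.classic (exists b, L - eps < F b)) as [[b0 Hb0]|Hn].
    - exists b0. intros y Hy.
      assert (F b0 < F y) by (apply F_incr; lra).
      assert (F y <= L) by (apply HL1; exists y; reflexivity).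
      apply Rabs_def1; lra.
    - exfalso. assert (L <= L - eps).
      { apply HL2. intros y [b ->]. destruct (Rle_dec (F b) (L - eps)); auto.
        exfalso; apply Hn; exists b; lra. }
      destruct eps; simpl in *; lra. }
  rewrite (is_lim_unique _ _ _ Hlim). reflexivity.
Qed.

Lemma F_surj l : - zeta 3 < l < zeta 3 -> exists r, F r = l.
Proof.
  rewrite zeta_eq. destruct FE_lub as [L [HL1 HL2]]. simpl. intros Hl.
  assert (Hpos : forall l, 0 <= l < L -> exists r, F r = l).
  { intros l0 Hl0.
    destruct (Classical_Prop.classic (exists b, l0 < F b)) as [[b Hb]|Hn].
    - destruct (IVT_gen F 0 b l0) as [r [_ Hr]].
      + intro; apply F_cont.
      + rewrite F0. split; [apply Rle_trans with 0; [apply Rmin_l|lra]| apply Rle_trans with (F b); [lra|apply Rmax_r]].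
      + exists r; exact Hr.
    - exfalso. assert (L <= l0).
      { apply HL2. intros y [b ->]. destruct (Rle_dec (F b) l0); auto.
        exfalso; apply Hn; exists b; lra. }
      lra. }
  destruct (Rle_dec 0 l).
  - apply Hpos; lra.
  - destruct (Hpos (-l)) as [r Hr]; [lra|]. exists (-r). rewrite F_odd, Hr. ring.
Qed.

Theorem mainTheorem16 (l : R) :
  - zeta 3 < l < zeta 3 ->
  let S := sleafh 3 l in
  (sleafh 3 (l / 2)) ^ 2 =
    - (1/2) * S ^ 2 - (1/2) * sqrt (1 - S ^ 2 + S ^ 4)
    + (1/2) * sqrt (-1 + S ^ 2 + 2 * S ^ 4
                    + (2 + 2 * S ^ 6) / sqrt (1 - S ^ 2 + S ^ 4)).
Proof.
  intros Hl S.
  assert (HS : F S = l).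
  { unfold S, sleafh. apply (epsilon_spec (inhabits 0) (fun r => leaf_int 3 r = l)).
    apply F_surj; exact Hl. }
  change (sleafh 3 (l / 2) ^ 2 = xf S).
  pose proof (F_abs S) as HA.
  destruct (alg_S S) as [[Hx0 _] _].
  set (t := sqrt (xf S)) in *.
  assert (Ht2 : t^2 = xf S) by (apply pow2_sqrt; lra).
  assert (Hs : F (sleafh 3 (l/2)) = l/2).
  { unfold sleafh. apply (epsilon_spec (inhabits 0) (fun r => leaf_int 3 r = l/2)).
    destruct (Rle_dec 0 S).
    - exists t. rewrite Rabs_right in HA by lra. lra.
    - exists (-t). rewrite Rabs_left in HA by lra. rewrite F_odd in HA.
      rewrite F_odd. lra. }
  destruct (Rle_dec 0 S).
  - rewrite Rabs_right in HA by lra.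
    assert (sleafh 3 (l/2) = t) by (apply F_inj; lra). rewrite H; exact Ht2.
  - rewrite Rabs_left in HA by lra. rewrite F_odd in HA.
    assert (sleafh 3 (l/2) = -t) by (apply F_inj; rewrite F_odd; lra).
    rewrite H. rewrite <- Ht2. ring.
Qed.
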